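(* Impose (A1)–(A6) and (A8), and fix $x\in\mathcal X$, $u\in[0,1]$. Then $\underline{\Delta}(x,u)\le\Delta^{OO}_{Y^*}(x,u)\le\overline{\Delta}(x,u)$, where: (i) under (A7.1): $\underline\Delta(x,u)=\underline y^*-\frac{m_0^Y(x,u)}{m_0^S(x,u)}$ and $\overline\Delta(x,u)=\frac{m_1^Y(x,u)-\underline y^*\Delta_S(x,u)}{m_0^S(x,u)}-\frac{m_0^Y(x,u)}{m_0^S(x,u)}$; (ii) under (A7.2): $\underline\Delta(x,u)=\frac{m_1^Y(x,u)-\overline y^*\Delta_S(x,u)}{m_0^S(x,u)}-\frac{m_0^Y(x,u)}{m_0^S(x,u)}$ and $\overline\Delta(x,u)=\overline y^*-\frac{m_0^Y(x,u)}{m_0^S(x,u)}$; (iii) under (A7.3) (sub-case (a) or (b)): $\underline\Delta(x,u)=\max\left\{\frac{m_1^Y(x,u)-\overline y^*\Delta_S(x,u)}{m_0^S(x,u)},\underline y^*\right\}-\frac{m_0^Y(x,u)}{m_0^S(x,u)}$ and $\overline\Delta(x,u)=\min\left\{\frac{m_1^Y(x,u)-\underline y^*\Delta_S(x,u)}{m_0^S(x,u)},\overline y^*\right\}-\frac{m_0^Y(x,u)}{m_0^S(x,u)}$.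
   Context: Standing setup. On a common probability space: $X$ (covariates, support $\mathcal X$), $Z$ (instrument, support $\mathcal Z$), $W=(X,Z)$; latent real random variables $U,V$, jointly continuously distributed conditional on $X$, with $U\mid X$ and $V\mid X$ each Uniform$[0,1]$ (their joint dependence unrestricted); real potential outcomes of interest $Y_0^*,Y_1^*$. Given functions $P:\mathcal X\times\mathcal Z\to[0,1]$ and $Q:\{0,1\}\times\mathcal X\to[0,1]$, define the treatment $D=\mathbf 1\{P(W)\ge U\}$, potential selection indicators $S_d=\mathbf 1\{Q(d,X)\ge V\}$ ($d\in\{0,1\}$), selection indicator $S=DS_1+(1-D)S_0$, potential observable outcomes $Y_d=S_dY_d^*$ and observable outcome $Y=DY_1+(1-D)Y_0$. For $x\in\mathcal X$, $u\in[0,1]$, $d\in\{0,1\}$: $m_d^Y(x,u)=\mathbb E[Y_d\mid X=x,U=u]$, $m_d^S(x,u)=\mathbb E[S_d\mid X=x,U=u]$, $\Delta_S(x,u)=m_1^S(x,u)-m_0^S(x,u)$, and $\Delta^{OO}_{Y^*}(x,u)=\mathbb E[Y_1^*-Y_0^*\mid X=x,U=u,S_0=1,S_1=1]$. Ratios appearing are assumed well defined (nonzero denominators). Assumptions: (A1) $Z$ is independent of $(U,V,Y_0^*,Y_1^* )$ conditional on $X$; (A2) the distribution of $P(W)$ given $X$ is nondegenerate; (A3) $\mathbb E|Y_d^*|<\infty$ and $\mathbb E[(Y_d^* )^2]<\infty$ for $d=0,1$; (A4) $0<\mathbb P[D=1\mid X]<1$; (A5) $X$ is invariant to counterfactual manipulation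 of treatment; (A6) $Y_0^*$ and $Y_1^*$ have a common support $\mathcal Y^*\subseteq\mathbb R$; write $\underline y^*=\inf\mathcal Y^*\in\mathbb R\cup\{-\infty\}$ and $\overline y^*=\sup\mathcal Y^*\in\mathbb R\cup\{+\infty\}$, assumed known. Support cases: (A7.1) $\underline y^*>-\infty$, $\overline y^*=+\infty$, $\mathcal Y^*$ an interval; (A7.2) $\underline y^*=-\infty$, $\overline y^*<\infty$, $\mathcal Y^*$ an interval; (A7.3) $\underline y^*,\overline y^*$ both finite and either (a) $\mathcal Y^*$ is an interval or (b) $\underline y^*\in\mathcal Y^*$ and $\overline y^*\in\mathcal Y^*$. (A8) $Q(1,x)>Q(0,x)>0$ for all $x\in\mathcal X$. *)

(* Defs.v *)
From HB Require Import structures.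
From mathcomp Require Import all_boot all_order all_algebra.
From mathcomp Require Import all_classical all_reals all_analysis.
From mathcomp Require Import measurable_realfun.
Set Implicit Arguments.
Unset Strict Implicit.
Unset Printing Implicit Defensive.
Import Order.TTheory GRing.Theory Num.Theory.
Import numFieldNormedType.Exports.
Local Open Scope classical_set_scope.
Local Open Scope ring_scope.

(* Regular conditional distribution of the sample point w given the random
   element f : Om -> T, as a kernel K : T -> probability Om R, in disintegration
   form:  E[g ; f \in B] = E[ (\int g d(K (f w))) ; f \in B ]  for every
   measurable g >= 0 and measurable B, i.e. \int g d(K t) is a version of
   E[g | f = t]. *)
Definition is_rcd d d' (Om : measurableType d) (T : measurableType d')
  (R : realType) (P : probability Om R) (f : Om -> T)
  (K : T -> probability Om R) : Prop :=
  [/\ measurable_fun [set: Om] f,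
      (forall A : set Om, measurable A ->
         measurable_fun [set: T] (fun t : T => (K t A : \bar R))) &
      (forall g : Om -> \bar R, measurable_fun [set: Om] g ->
         (forall w, (0 <= g w)%E) ->
         forall B : set T, measurable B ->
           (\int[P]_(w in f @^-1` B) g w =
            \int[P]_(w in f @^-1` B) \int[K (f w)]_w' g w')%E)].

Definition Dind d dX dZ (Om : measurableType d) (TX : measurableType dX)
  (TZ : measurableType dZ) (R : realType) (X : Om -> TX) (Z : Om -> TZ)
  (U : Om -> R) (Pf : TX -> TZ -> R) (w : Om) : R :=
  if U w <= Pf (X w) (Z w) then 1 else 0.

Definition Sind d dX (Om : measurableType d) (TX : measurableType dX)
  (R : realType) (X : Om -> TX) (V : Om -> R) (Qf : bool -> TX -> R)
  (b : bool) (w : Om) : R :=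
  if V w <= Qf b (X w) then 1 else 0.

Definition Ypot d dX (Om : measurableType d) (TX : measurableType dX)
  (R : realType) (X : Om -> TX) (V : Om -> R) (Qf : bool -> TX -> R)
  (Y0s Y1s : Om -> R) (b : bool) (w : Om) : R :=
  Sind X V Qf b w * (if b then Y1s w else Y0s w).

(* m_d^Y at the conditioning value t = (x,u): E[Y_d | X = x, U = u]. *)
Definition mY d dX (Om : measurableType d) (TX : measurableType dX)
  (R : realType) (K : TX * R -> probability Om R) (X : Om -> TX)
  (V : Om -> R) (Qf : bool -> TX -> R) (Y0s Y1s : Om -> R)
  (b : bool) (t : TX * R) : R :=
  Rintegral (K t) setT (Ypot X V Qf Y0s Y1s b).

(* m_d^S at t = (x,u): E[S_d | X = x, U = u]. *)
Definition mS d dX (Om : measurableType d) (TX : measurableType dX)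
  (R : realType) (K : TX * R -> probability Om R) (X : Om -> TX)
  (V : Om -> R) (Qf : bool -> TX -> R) (b : bool) (t : TX * R) : R :=
  Rintegral (K t) setT (Sind X V Qf b).

Definition OOevent d dX (Om : measurableType d) (TX : measurableType dX)
  (R : realType) (X : Om -> TX) (V : Om -> R) (Qf : bool -> TX -> R) : set Om :=
  [set w | Sind X V Qf false w = 1 /\ Sind X V Qf true w = 1].

(* Delta^OO_{Y*}(x,u) = E[Y_1^* - Y_0^* | X = x, U = u, S_0 = 1, S_1 = 1]. *)
Definition DeltaOO d dX (Om : measurableType d) (TX : measurableType dX)
  (R : realType) (K : TX * R -> probability Om R) (X : Om -> TX)
  (V : Om -> R) (Qf : bool -> TX -> R) (Y0s Y1s : Om -> R) (t : TX * R) : R :=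
  Rintegral (K t) (OOevent X V Qf) (fun w => Y1s w - Y0s w)
  / fine (K t (OOevent X V Qf)).

Definition rv_support d (Om : measurableType d) (R : realType)
  (P : probability Om R) (Y : Om -> R) : set R :=
  [set y : R | forall e : R, 0 < e ->
    (0 < P [set w | (`|Y w - y| < e)%R])%E].

Definition is_interval_set (R : realType) (S : set R) : Prop :=
  forall a b c, S a -> S c -> a <= b -> b <= c -> S b.

(* Main.v *)
Require Import Defs.
From HB Require Import structures.
From mathcomp Require Import all_boot all_order all_algebra.
From mathcomp Require Import all_classical all_reals all_analysis.
From mathcomp Require Import measurable_realfun.
From mathcomp Require Import ring lra.
Import Order.TTheory GRing.Theory Num.Theory.
Import numFieldNormedType.Exports.
Local Open Scope classical_set_scope.
Local Open Scope ring_scope.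

Lemma mpreT d1 d2 (A1 : measurableType d1) (A2 : measurableType d2) (g : A1 -> A2)
  (B : set A2) : measurable_fun setT g -> measurable B -> measurable (g @^-1` B).
Proof. by move=> mg mB; rewrite -[_ @^-1` _]setTI; exact: mg. Qed.


Section supp.
Context d (T : measurableType d) (R : realType).
Variable P : probability T R.
Variable Y : T -> R.
Hypothesis mY : measurable_fun setT Y.

Let mpre (A : set R) : measurable A -> measurable (Y @^-1` A).
Proof. by move=> mA; rewrite -[_ @^-1` _]setTI; exact: mY. Qed.

Let mint (L r : R) : measurable [set w | L <= Y w < r].
Proof.
rewrite (_ : [set w | _] = Y @^-1` [set` `[L, r[]); first by apply: mpre; exact: measurable_itv.
by apply/seteqP; split => w /=; rewrite in_itv.
Qed.

Lemma supp_stepA (a : R) : (forall y, rv_support P Y y -> a <= y) ->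
  forall L r, r < a -> P [set w | L <= Y w < r] = 0%E.
Proof.
move=> ha L r ra.
have [rL|Lr] := leP r L.
  rewrite (_ : [set w | _] = set0) ?measure0//; apply/seteqP; split => w //=.
  by case/andP => h1 h2; have := lt_le_trans h2 rL; rewrite ltNge h1.
pose G := [set s | L <= s <= r /\ P [set w | L <= Y w < s] = 0%E].
have GL : G L.
  split; first by rewrite lexx ltW.
  rewrite (_ : [set w | _] = set0) ?measure0//; apply/seteqP; split => w //=.
  by case/andP => h1 h2; have := lt_le_trans h2 h1; rewrite ltxx.
have hs : has_sup G by split; [exists L | exists r => s [/andP[]]].
set s := sup G.
have Ls : L <= s by exact: sup_upper_bound.
have sr : s <= r by apply: ge_sup => //; [exists L | move=> x [/andP[]]].
have [e e0 He] : exists2 e, 0 < e & P [set w | `|Y w - s| < e] = 0%E.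
  apply: contrapT => H.
  have : rv_support P Y s.
    move=> e e0; rewrite lt_neqAle measure_ge0 andbT eq_sym.
    by apply/negP => /eqP h; apply: H; exists e.
  by move/ha => as_; have := le_lt_trans as_ (le_lt_trans sr ra); rewrite ltxx.
have [g Gg sg] := sup_adherent e0 hs.
pose s' := Num.min (s + e / 2) r.
have Gs' : G s'.
  split.
    apply/andP; split; last by rewrite ge_min lexx orbT.
    by rewrite le_min (le_trans Ls) ?lerDl ?divr_ge0 ?ltW.
  apply/eqP; rewrite -measure_le0.
  have mB : measurable [set w | `|Y w - s| < e].
    rewrite (_ : [set w | _] = Y @^-1` [set` `]s - e, s + e[]); first by apply: mpre; exact: measurable_itv.
    by apply/seteqP; split => w /=; rewrite in_itv /= ltr_distl.
  have sub : [set w | L <= Y w < s'] `<=` [set w | L <= Y w < g] `|` [set w | `|Y w - s| < e].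
    move=> w /= /andP[Lw ws'].
    have [wg|gw] := ltP (Y w) g; first by left; apply/andP.
    right; rewrite ltr_distl; apply/andP; split.
      by rewrite (lt_le_trans sg gw).
    apply: (lt_le_trans ws'); rewrite ge_min; apply/orP; left.
    by rewrite lerD2l ler_pdivrMr// ler_pMr// ler1n.
  apply: (le_trans (le_measure _ _ _ sub)); rewrite ?inE//; first exact: measurableU.
  apply: (le_trans (measureU2 _ _ _)) => //.
  case: Gg => _ h0.
  have h1 : (P [set w | (L <= Y w < g)%R] + P [set w | (`|Y w - s| < e)%R] <= 0)%E.
    by rewrite h0 He adde0.
  exact: h1.
have s's : s' <= s by exact: sup_upper_bound.
have -> : r = s'.
  move: s's; rewrite /s' ge_min => /orP[|//].
  by rewrite gerDl leNgt divr_gt0.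
  by move=> rs; apply/esym/min_idPr; rewrite (le_trans rs) ?lerDl ?divr_ge0 ?ltW.
by case: Gs'.
Qed.

Lemma supp_lower (a : R) : (forall y, rv_support P Y y -> a <= y) ->
  P [set w | Y w < a] = 0%E.
Proof.
move=> ha.
have mA : measurable [set w | Y w < a].
  rewrite (_ : [set w | _] = Y @^-1` [set` `]-oo, a[]); first by apply: mpre; exact: measurable_itv.
  by apply/seteqP; split => w /=; rewrite in_itv.
apply/(negligibleP _ mA).
apply: (negligibleS (B := [set w | Y w < a]) (A := \bigcup_n [set w | - (n%:R) <= Y w < a - (n.+1%:R)^-1])).
  move=> w /= wa.
  have ha0 : 0 < a - Y w by rewrite subr_gt0.
  set n := Num.Def.archi_bound (`|Y w| + (a - Y w)^-1).
  have hi : 0 < (a - Y w)^-1 by rewrite invr_gt0.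
  have hn := @archi_boundP R (`|Y w| + (a - Y w)^-1) (addr_ge0 (normr_ge0 _) (ltW hi)).
  exists n => //=; apply/andP; split.
    rewrite lerNl; apply: le_trans (ler_norm _) _; rewrite normrN.
    by apply/ltW/(le_lt_trans _ hn); rewrite lerDl ltW.
  have h2 : (a - Y w)^-1 < n.+1%:R.
    apply: (le_lt_trans _ (lt_le_trans hn _)); first by rewrite lerDr.
    by rewrite ler_nat.
  have h3 : (n.+1%:R)^-1 < a - Y w.
    by rewrite -[a - Y w]invrK ltf_pV2 ?posrE ?ltr0n.
  move: h3; set z := (n.+1%:R)^-1 => h3; lra.
apply: negligible_bigcup => n; apply/negligibleP; first exact: mint.
apply: supp_stepA ha _ _ _.
by rewrite ltrBlDr ltrDl invr_gt0 ltr0n.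
Qed.
End supp.

Lemma supp_upper d (T : measurableType d) (R : realType) (P : probability T R)
  (Y : T -> R) (mY : measurable_fun setT Y) (b : R) :
  (forall y, rv_support P Y y -> y <= b) -> P [set w | b < Y w] = 0%E.
Proof.
move=> hb.
have mN : measurable_fun setT (fun w => - Y w) by exact: measurableT_comp.
have := @supp_lower d T R P (fun w => - Y w) mN (- b).
rewrite (_ : [set w | - Y w < - b] = [set w | b < Y w]); last first.
  by apply/seteqP; split => w /=; rewrite ltrN2.
apply => y hy; rewrite lerNl; apply: hb => e e0.
rewrite (_ : [set w | `|Y w - - y| < e] = [set w | `|- Y w - y| < e]); first exact: hy.
by apply/seteqP; split => w /=; rewrite -normrN opprD opprK.
Qed.




Section transfer.
Context d d' (Om : measurableType d) (TT : measurableType d') (R : realType).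
Variables (P : probability Om R) (f : Om -> TT) (K : TT -> probability Om R).
Hypothesis rcd : is_rcd P f K.

Let mf : measurable_fun setT f. Proof. by case: rcd. Qed.
Let mK : forall A, measurable A -> measurable_fun [set: TT] (fun t => (K t A : \bar R)).
Proof. by case: rcd. Qed.
Let dis := let: And3 _ _ h := rcd in h.

Let mfpre (N : set TT) : measurable N -> measurable (f @^-1` N).
Proof. by move=> mN; rewrite -[_ @^-1` _]setTI; exact: mf. Qed.

Lemma transfer_null (A : set Om) : measurable A -> P A = 0%E ->
  exists N, [/\ measurable N, P (f @^-1` N) = 0%E & forall t, ~ N t -> K t A = 0%E].
Proof.
move=> mA PA0.
pose h t := (K t A : \bar R).
have mh : measurable_fun setT h by exact: mK.
have E1 : (\int[P]_(w in setT) h (f w) =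
    \int[P]_(w in f @^-1` setT) \int[K (f w)]_w' (\1_A w')%:E)%E.
  by rewrite preimage_setT; apply: eq_integral => w _; rewrite integral_indic// setIT.
have E2 : (\int[P]_(w in f @^-1` setT) (\1_A w)%:E = 0)%E.
  by rewrite preimage_setT integral_indic// setIT; exact: PA0.
have H : (\int[P]_(w in setT) h (f w) = 0)%E.
  rewrite E1 -(dis (fun w => (\1_A w)%:E) _ _ setT measurableT)//.
  by apply/measurable_EFinP; exact: measurable_indic.
have mhf : measurable_fun setT (h \o f) by exact: measurableT_comp.
have : (\int[P]_(w in setT) `|(h \o f) w| = 0)%E.
  by rewrite -H; apply: eq_integral => w _; rewrite gee0_abs.
move/(ae_eq_integral_abs _ measurableT mhf) => [M [mM PM0 sM]].
exists (h @^-1` (~` [set 0%E])); split.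
- by apply: mpreT mh _; apply: measurableC; exact: emeasurable_set1.
- apply: (subset_measure0 _ _ _ PM0) => //.
    by apply: mfpre; apply: mpreT mh _; apply: measurableC; exact: emeasurable_set1.
  by move=> w /= hw; apply: sM => /=; move=> /(_ I).
- by move=> t /= /contrapT.
Qed.

Lemma transfer_int (Y : Om -> R) : measurable_fun setT Y ->
  P.-integrable setT (EFin \o Y) ->
  exists N, [/\ measurable N, P (f @^-1` N) = 0%E &
    forall t, ~ N t -> (K t).-integrable setT (EFin \o Y)].
Proof.
move=> mY iY.
pose h t := (\int[K t]_w `|(Y w)%:E|)%E.
have mk : measurable_fun setT (fun w => `|(Y w)%:E|%E).
  by apply: measurableT_comp => //; exact/measurable_EFinP.
have mh : measurable_fun setT h.
  by apply: (@measurable_fun_integral_kernel _ _ _ _ _ (fun t => K t)) => //.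
have H := dis (fun w => `|(Y w)%:E|%E) mk (fun w => abse_ge0 _) setT measurableT.
rewrite preimage_setT in H.
have mhf : measurable_fun setT (h \o f) by exact: measurableT_comp.
have ihf : P.-integrable setT (h \o f).
  apply/integrableP; split => //.
  rewrite (eq_integral (h \o f)); last by move=> w _; rewrite gee0_abs// integral_ge0.
  by rewrite /= -H; case/integrableP : iY.
have [M [mM PM0 sM]] := integrable_ae measurableT ihf.
exists (h @^-1` [set +oo%E]); split.
- by apply: mpreT mh _; exact: emeasurable_set1.
- apply: (subset_measure0 _ _ _ PM0) => //.
    by apply: mfpre; apply: mpreT mh _; exact: emeasurable_set1.
  by move=> w /= hw; apply: sM => /= /(_ I); rewrite hw.
- move=> t /= ht; apply/integrableP; split; first exact/measurable_EFinP.
  by rewrite ltNge leye_eq; apply/negP => /eqP.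
Qed.
End transfer.




Section gen.
Context d (T : measurableType d) (R : realType).

Lemma ae_le_Rint (mu : {measure set T -> \bar R}) (G : set T) (f1 f2 : T -> R) :
  measurable G -> mu (~` G) = 0%E -> mu.-integrable setT (EFin \o f1) ->
  mu.-integrable setT (EFin \o f2) ->
  (forall x, G x -> f1 x <= f2 x) -> Rintegral mu setT f1 <= Rintegral mu setT f2.
Proof.
move=> mG G0 i1 i2 h.
have mCG : measurable (~` G) by exact: measurableC.
rewrite /Rintegral (negligible_integral mCG _ i1)// (negligible_integral mCG _ i2)//.
rewrite setTD setCK.
rewrite -/(Rintegral mu G f1) -/(Rintegral mu G f2).
apply: le_Rintegral => //.
- by apply: integrableS i1.
- by apply: integrableS i2.
Qed.

Variable mu : probability T R.

Lemma int_bdd (phi : T -> R) : measurable_fun setT phi ->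
  (forall w, 0 <= phi w <= 1) -> mu.-integrable setT (EFin \o phi).
Proof.
move=> mphi h; apply: (@le_integrable _ _ _ _ _ measurableT _ (EFin \o cst 1)) => //.
- exact/measurable_EFinP.
- by move=> w _ /=; have /andP[h0 h1] := h w; rewrite lee_fin ger0_norm// ger0_norm.
- exact: finite_measure_integrable_cst.
Qed.

Lemma int_bddM (phi Y : T -> R) : measurable_fun setT phi ->
  measurable_fun setT Y ->
  (forall w, 0 <= phi w <= 1) -> mu.-integrable setT (EFin \o Y) ->
  mu.-integrable setT (EFin \o (fun w => phi w * Y w)).
Proof.
move=> mphi mY h iY; apply: (@le_integrable _ _ _ _ _ measurableT _ (EFin \o Y)) => //.
- by apply/measurable_EFinP; exact: measurable_funM.
- move=> w _ /=; rewrite lee_fin normrM.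
  have /andP[h0 h1] := h w.
  by rewrite ger0_norm// ler_piMl.
Qed.

Lemma bound_lo (phi Y : T -> R) (a : R) : measurable_fun setT phi ->
  measurable_fun setT Y ->
  (forall w, 0 <= phi w <= 1) -> mu.-integrable setT (EFin \o Y) ->
  mu [set w | Y w < a] = 0%E ->
  a * Rintegral mu setT phi <= Rintegral mu setT (fun w => phi w * Y w).
Proof.
move=> mphi mY h iY Y0.
rewrite -RintegralZl//; last exact: int_bdd.
apply: (@ae_le_Rint _ [set w | a <= Y w]).
- rewrite (_ : [set w | _] = Y @^-1` [set` `[a, +oo[]); first by apply: mpreT mY _; exact: measurable_itv.
  by apply/seteqP; split => w /=; rewrite in_itv /= andbT.
- by rewrite (_ : ~` _ = [set w | Y w < a]) //; apply/seteqP; split => w /=; rewrite ltNge => /negP.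
- apply: (@le_integrable _ _ _ _ _ measurableT _ (EFin \o cst `|a|)) => //.
  + by apply/measurable_EFinP; apply: measurable_funM.
  + move=> w _ /=; rewrite lee_fin normrM normr_id.
    have /andP[h0 h1] := h w.
    by rewrite (ger0_norm h0) ler_piMr.
  + exact: finite_measure_integrable_cst.
- exact: int_bddM.
- move=> w /= aw; rewrite mulrC; apply: ler_wpM2l => //.
  by case/andP: (h w).
Qed.

Lemma bound_hi (phi Y : T -> R) (b : R) : measurable_fun setT phi ->
  measurable_fun setT Y ->
  (forall w, 0 <= phi w <= 1) -> mu.-integrable setT (EFin \o Y) ->
  mu [set w | b < Y w] = 0%E ->
  Rintegral mu setT (fun w => phi w * Y w) <= b * Rintegral mu setT phi.
Proof.
move=> mphi mY h iY Y0.
rewrite -RintegralZl//; last exact: int_bdd.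
apply: (@ae_le_Rint _ [set w | Y w <= b]).
- rewrite (_ : [set w | _] = Y @^-1` [set` `]-oo, b]]); first by apply: mpreT mY _; exact: measurable_itv.
  by apply/seteqP; split => w /=; rewrite in_itv /=.
- by rewrite (_ : ~` _ = [set w | b < Y w]) //; apply/seteqP; split => w /=; rewrite ltNge => /negP.
- exact: int_bddM.
- apply: (@le_integrable _ _ _ _ _ measurableT _ (EFin \o cst `|b|)) => //.
  + by apply/measurable_EFinP; apply: measurable_funM.
  + move=> w _ /=; rewrite lee_fin normrM normr_id.
    have /andP[h0 h1] := h w.
    by rewrite (ger0_norm h0) ler_piMr.
  + exact: finite_measure_integrable_cst.
- move=> w /= aw; rewrite [b * _]mulrC; apply: ler_wpM2l => //.
  by case/andP: (h w).
Qed.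
End gen.

Section core.
Context d dX (Om : measurableType d) (TX : measurableType dX) (R : realType).
Variables (X : Om -> TX) (V : Om -> R) (Qf : bool -> TX -> R).
Hypotheses (mX : measurable_fun setT X) (mV : measurable_fun setT V)
  (mQf : forall b, measurable_fun setT (Qf b))
  (A8 : forall x, 0 < Qf false x < Qf true x).

Let Aset b := [set w | V w <= Qf b (X w)].

Let mAset b : measurable (Aset b).
Proof.
rewrite -[Aset b]setTI; apply: measurable_fun_le => //.
exact: measurableT_comp.
Qed.

Let Sind_indic b : Sind X V Qf b = \1_(Aset b).
Proof.
apply/funext => w; rewrite /Sind indicE; case: ifPn => h.
  by rewrite mem_set.
by rewrite memNset //= => h'; rewrite h' in h.
Qed.

Let mSind b : measurable_fun setT (Sind X V Qf b).
Proof. by rewrite Sind_indic; exact: measurable_indic. Qed.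

Let Sind01 b w : 0 <= Sind X V Qf b w <= 1.
Proof. by rewrite /Sind; case: ifPn => _; rewrite ?lexx ?ler01. Qed.

Let OO_eq : OOevent X V Qf = Aset false.
Proof.
apply/seteqP; split => w /=; rewrite /OOevent /Aset /Sind /=.
  case: ifPn => [h _ //|_ [] /eqP]; rewrite eq_sym oner_eq0 //.
move=> h; rewrite ifT//; split => //; rewrite ifT//.
by apply: (le_trans h); case/andP: (A8 (X w)) => _ /ltW.
Qed.

Let Sle w : Sind X V Qf false w <= Sind X V Qf true w.
Proof.
rewrite /Sind; case: ifPn => h; last by case: ifPn => _; rewrite ?ler01.
by rewrite ifT // (le_trans h) //; case/andP: (A8 (X w)) => _ /ltW.
Qed.

Lemma core (mu : probability Om R) (Y0 Y1 : Om -> R) (a b : R) :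
  measurable_fun setT Y0 -> measurable_fun setT Y1 ->
  mu.-integrable setT (EFin \o Y0) -> mu.-integrable setT (EFin \o Y1) ->
  Rintegral mu setT (Sind X V Qf false) != 0 ->
  exists A C : R,
  [/\ Rintegral mu (OOevent X V Qf) (fun w => Y1 w - Y0 w) / fine (mu (OOevent X V Qf))
       = A / Rintegral mu setT (Sind X V Qf false)
         - Rintegral mu setT (Ypot X V Qf Y0 Y1 false) / Rintegral mu setT (Sind X V Qf false),
      Rintegral mu setT (Ypot X V Qf Y0 Y1 true) = A + C,
      0 < Rintegral mu setT (Sind X V Qf false),
      (mu [set w | Y1 w < a] = 0%E ->
         a * Rintegral mu setT (Sind X V Qf false) <= A /\
         a * (Rintegral mu setT (Sind X V Qf true) - Rintegral mu setT (Sind X V Qf false)) <= C) &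
      (mu [set w | b < Y1 w] = 0%E ->
         A <= b * Rintegral mu setT (Sind X V Qf false) /\
         C <= b * (Rintegral mu setT (Sind X V Qf true) - Rintegral mu setT (Sind X V Qf false)))].
Proof.
move=> mY0 mY1 i0 i1 m0.
set S0 := Sind X V Qf false; set S1 := Sind X V Qf true.
have m0S : Rintegral mu setT S0 = fine (mu (Aset false)).
  by rewrite /Rintegral /S0 Sind_indic integral_indic// setIT.
pose phi w := S1 w - S0 w.
have mphi : measurable_fun setT phi.
  by apply: measurable_funB; apply: mSind.
have phi01 w : 0 <= phi w <= 1.
  rewrite /phi subr_ge0 Sle /=; have := Sind01 true w; have := Sind01 false w.
  move=> /andP[h1 h2] /andP[h3 h4]; apply: (le_trans (lerB h4 h1)); by rewrite subr0.
pose AA := Rintegral mu setT (fun w => S0 w * Y1 w).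
pose CC := Rintegral mu setT (fun w => phi w * Y1 w).
exists AA; exists CC.
have iS0Y1 := @int_bddM _ _ _ mu _ _ (mSind false) mY1 (Sind01 false) i1.
have iphiY1 := @int_bddM _ _ _ mu _ _ mphi mY1 phi01 i1.
have eqm : Rintegral mu setT S1 - Rintegral mu setT S0 = Rintegral mu setT phi.
  by rewrite /phi RintegralB//; apply: (@int_bdd _ _ _ mu) => //; [exact: mSind|exact: Sind01|exact: mSind|exact: Sind01].
have eqA (Y : Om -> R) : Rintegral mu (Aset false) Y =
    Rintegral mu setT (fun w => S0 w * Y w).
  rewrite Rintegral_mkcond; apply: eq_Rintegral => w _.
  by rewrite /S0 Sind_indic indicE patchE; case: (w \in Aset false); rewrite ?mul1r ?mul0r.
split.
- rewrite OO_eq -m0S RintegralB//; last 2 first.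
  + by apply: integrableS i1.
  + by apply: integrableS i0.
  rewrite !eqA mulrBl; congr (_ / _ - _ / _).
- rewrite /AA /CC -RintegralD//; apply: eq_Rintegral => w _.
  by rewrite /Ypot /phi /= mulrBl addrC subrK.
- rewrite lt_neqAle eq_sym m0 /= m0S fine_ge0//.
- move=> h; split; first by apply: (@bound_lo _ _ _ mu S0 Y1) => //; [exact: mSind|exact: Sind01].
  by rewrite eqm; apply: (@bound_lo _ _ _ mu phi Y1).
- move=> h; split; first by apply: (@bound_hi _ _ _ mu S0 Y1) => //; [exact: mSind|exact: Sind01].
  by rewrite eqm; apply: (@bound_hi _ _ _ mu phi Y1).
Qed.
End core.


Lemma ae_from d1 d2 (A1 : measurableType d1) (A2 : measurableType d2) (R : realType)
  (P : probability A1 R) (f : A1 -> A2) (Pr : A2 -> Prop) (N : set A2) :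
  measurable N -> P (f @^-1` N) = 0%E -> (forall t, ~ N t -> Pr t) ->
  {ae pushforward P f, forall t, Pr t}.
Proof.
move=> mN PN h; exists N; split => // t /= nPt.
by apply: contrapT => nN; exact: nPt (h t nN).
Qed.

Lemma nullU d (T : measurableType d) (R : realType) (P : probability T R)
  (A B : set T) : measurable A -> measurable B -> P A = 0%E -> P B = 0%E ->
  P (A `|` B) = 0%E.
Proof.
move=> mA mB hA hB; apply/eqP; rewrite -measure_le0.
apply: le_trans (measureU2 _ mA mB) _.
have h : (P A + P B <= 0)%E by rewrite hA hB adde0.
exact: h.
Qed.

Section alg.
Variable R : realFieldType.
Lemma alg_lo (a A C c s D1 : R) : 0 < s -> a * s <= A -> a * (D1 - s) <= C ->
  a - c / s <= A / s - c / s /\ A / s - c / s <= ((A + C) - a * (D1 - s)) / s - c / s.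
Proof.
move=> s0 h1 h2; rewrite !lerD2r; split.
  by rewrite ler_pdivlMr.
by rewrite ler_pM2r ?invr_gt0 //; lra.
Qed.
Lemma alg_hi (b A C c s D1 : R) : 0 < s -> A <= b * s -> C <= b * (D1 - s) ->
  ((A + C) - b * (D1 - s)) / s - c / s <= A / s - c / s /\ A / s - c / s <= b - c / s.
Proof.
move=> s0 h1 h2; rewrite !lerD2r; split.
  by rewrite ler_pM2r ?invr_gt0 //; lra.
by rewrite ler_pdivrMr.
Qed.
End alg.

Theorem corollary1 (R : realType) (dO dX dZ : measure_display)
  (Om : measurableType dO) (TX : measurableType dX) (TZ : measurableType dZ)
  (P : probability Om R)
  (X : {mfun Om >-> TX}) (Z : {mfun Om >-> TZ})
  (U V Y0s Y1s : {mfun Om >-> R})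
  (Pf : TX -> TZ -> R) (Qf : bool -> TX -> R)
  (KX : TX -> probability Om R) (KXU : TX * R -> probability Om R)
  (Ystar : set R)
  (* P : X x Z -> [0,1] and Q : {0,1} x X -> [0,1], measurable *)
  (hPf01 : forall x z, 0 <= Pf x z <= 1)
  (hQf01 : forall b x, 0 <= Qf b x <= 1)
  (mPf : measurable_fun [set: TX * TZ] (fun xz => Pf xz.1 xz.2))
  (mQf : forall b, measurable_fun [set: TX] (Qf b))
  (* KX and KXU are regular conditional distributions given X and (X,U) *)
  (rcdX : is_rcd P X KX)
  (rcdXU : is_rcd P (fun w => (X w, U w)) KXU)
  (* U | X ~ Uniform[0,1], V | X ~ Uniform[0,1] *)
  (U_unif : {ae pushforward P X, forall x : TX, forall t : R, 0 <= t <= 1 ->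
     KX x [set w | U w <= t] = t%:E})
  (V_unif : {ae pushforward P X, forall x : TX, forall t : R, 0 <= t <= 1 ->
     KX x [set w | V w <= t] = t%:E})
  (* (U,V) jointly continuously distributed conditional on X *)
  (UV_cont : {ae pushforward P X, forall x : TX, forall N : set (R * R),
     measurable N -> product_measure1 (@lebesgue_measure R) (@lebesgue_measure R) N = 0%E ->
     KX x [set w | N (U w, V w)] = 0%E})
  (* (A1) Z independent of (U, V, Y0s, Y1s) conditional on X *)
  (A1 : {ae pushforward P X, forall x : TX,
     forall (B : set TZ) (C : set ((R * R) * (R * R))),
     measurable B -> measurable C ->
     KX x (Z @^-1` B `&` [set w | C ((U w, V w), (Y0s w, Y1s w))]) =
     (KX x (Z @^-1` B) * KX x [set w | C ((U w, V w), (Y0s w, Y1s w))])%E})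
  (* (A2) the distribution of P(W) given X is nondegenerate *)
  (A2 : {ae pushforward P X, forall x : TX,
     ~ (exists c : R, KX x [set w | Pf (X w) (Z w) = c] = 1%E)})
  (* (A3) first and second moments of Y0s, Y1s finite *)
  (A3 : forall b : bool,
     P.-integrable setT (fun w => ((if b then Y1s else Y0s) w)%:E) /\
     P.-integrable setT (fun w => (((if b then Y1s else Y0s) w) ^+ 2)%:E))
  (* (A4) 0 < P[D = 1 | X] < 1 *)
  (A4 : {ae pushforward P X, forall x : TX,
     (0 < KX x [set w | Dind X Z U Pf w = 1%R] < 1)%E})
  (* (A6) Y0s and Y1s have common support Ystar *)
  (A6 : rv_support P Y0s = Ystar /\ rv_support P Y1s = Ystar)
  (* (A8) Q(1,x) > Q(0,x) > 0 *)
  (A8 : forall x, 0 < Qf false x < Qf true x) :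
  let ylo := ereal_inf [set y%:E | y in Ystar] in
  let yhi := ereal_sup [set y%:E | y in Ystar] in
  let m0Y := mY KXU X V Qf Y0s Y1s false in
  let m1Y := mY KXU X V Qf Y0s Y1s true in
  let m0S := mS KXU X V Qf false in
  let DS := fun t => mS KXU X V Qf true t - mS KXU X V Qf false t in
  let DOO := DeltaOO KXU X V Qf Y0s Y1s in
  (* (i) under (A7.1) *)
  (forall a : R, ylo = a%:E -> yhi = +oo%E -> is_interval_set Ystar ->
   {ae pushforward P (fun w => (X w, U w)), forall t : TX * R,
     m0S t != 0 -> fine (KXU t (OOevent X V Qf)) != 0 ->
     a - m0Y t / m0S t <= DOO t /\
     DOO t <= (m1Y t - a * DS t) / m0S t - m0Y t / m0S t}) /\
  (* (ii) under (A7.2) *)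
  (forall b : R, ylo = -oo%E -> yhi = b%:E -> is_interval_set Ystar ->
   {ae pushforward P (fun w => (X w, U w)), forall t : TX * R,
     m0S t != 0 -> fine (KXU t (OOevent X V Qf)) != 0 ->
     (m1Y t - b * DS t) / m0S t - m0Y t / m0S t <= DOO t /\
     DOO t <= b - m0Y t / m0S t}) /\
  (* (iii) under (A7.3), sub-case (a) or (b) *)
  (forall a b : R, ylo = a%:E -> yhi = b%:E ->
   (is_interval_set Ystar \/ (Ystar a /\ Ystar b)) ->
   {ae pushforward P (fun w => (X w, U w)), forall t : TX * R,
     m0S t != 0 -> fine (KXU t (OOevent X V Qf)) != 0 ->
     Num.max ((m1Y t - b * DS t) / m0S t) a - m0Y t / m0S t <= DOO t /\
     DOO t <= Num.min ((m1Y t - a * DS t) / m0S t) b - m0Y t / m0S t}).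

Proof.
move=> ylo yhi m0Y m1Y m0S DS DOO.
pose f := fun w => (X w, U w).
have mf : measurable_fun setT f by case: rcdXU.
have mY0 : measurable_fun setT Y0s by exact: measurable_funP.
have mY1 : measurable_fun setT Y1s by exact: measurable_funP.
have mX : measurable_fun setT X by exact: measurable_funP.
have mV : measurable_fun setT V by exact: measurable_funP.
have [N0 [mN0 PN0 hN0]] := @transfer_int _ _ _ _ _ P f KXU rcdXU _ mY0 (A3 false).1.
have [N1 [mN1 PN1 hN1]] := @transfer_int _ _ _ _ _ P f KXU rcdXU _ mY1 (A3 true).1.
have key a b t : ~ N0 t -> ~ N1 t -> m0S t != 0 ->
  exists A C : R,
  [/\ DOO t = A / m0S t - m0Y t / m0S t, m1Y t = A + C, 0 < m0S t,
      (KXU t [set w | Y1s w < a] = 0%E ->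
         a * m0S t <= A /\ a * DS t <= C) &
      (KXU t [set w | b < Y1s w] = 0%E ->
         A <= b * m0S t /\ C <= b * DS t)].
  move=> n0 n1 h.
  exact: (@core _ _ _ _ _ X V Qf mX mV mQf A8 (KXU t) Y0s Y1s a b mY0 mY1 (hN0 t n0) (hN1 t n1) h).
have mlo (a : R) : measurable [set w | Y1s w < a].
  rewrite (_ : [set w | _] = Y1s @^-1` [set` `]-oo, a[]); first by apply: mpreT mY1 _; exact: measurable_itv.
  by apply/seteqP; split => w /=; rewrite in_itv.
have mhi (b : R) : measurable [set w | b < Y1s w].
  rewrite (_ : [set w | _] = Y1s @^-1` [set` `]b, +oo[]); first by apply: mpreT mY1 _; exact: measurable_itv.
  by apply/seteqP; split => w /=; rewrite in_itv /= andbT.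
have nlo (a : R) : ylo = a%:E -> P [set w | Y1s w < a] = 0%E.
  move=> Hlo; apply: (@supp_lower _ _ _ P Y1s mY1 a) => y.
  rewrite A6.2 => yY; rewrite -lee_fin -Hlo; apply: ereal_inf_lbound; by exists y.
have nhi (b : R) : yhi = b%:E -> P [set w | b < Y1s w] = 0%E.
  move=> Hhi; apply: (@supp_upper _ _ _ P Y1s mY1 b) => y.
  rewrite A6.2 => yY; rewrite -lee_fin -Hhi; apply: ereal_sup_ubound; by exists y.
have mpf (N : set (TX * R)) : measurable N -> measurable (f @^-1` N).
  by move=> mN; apply: mpreT mf mN.
split; [|split].
- move=> a Hlo Hhi _.
  have [Na [mNa PNa hNa]] := @transfer_null _ _ _ _ _ P f KXU rcdXU _ (mlo a) (nlo a Hlo).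
  apply: (@ae_from _ _ _ _ _ P f _ (N0 `|` N1 `|` Na)).
  + by apply: measurableU => //; apply: measurableU.
  + by rewrite !preimage_setU; apply: nullU => //; [apply: measurableU; exact: mpf|exact: mpf|apply: nullU => //; exact: mpf].
  + move=> t nN hm0 _.
    have n0 : ~ N0 t by move=> h; apply: nN; left; left.
    have n1 : ~ N1 t by move=> h; apply: nN; left; right.
    have na : ~ Na t by move=> h; apply: nN; right.
    have [A [C [eD eM s0 hlo _]]] := key a a t n0 n1 hm0.
    have [h1 h2] := hlo (hNa t na).
    rewrite eD eM; exact: alg_lo.
- move=> b Hlo Hhi _.
  have [Nb [mNb PNb hNb]] := @transfer_null _ _ _ _ _ P f KXU rcdXU _ (mhi b) (nhi b Hhi).
  apply: (@ae_from _ _ _ _ _ P f _ (N0 `|` N1 `|` Nb)).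
  + by apply: measurableU => //; apply: measurableU.
  + by rewrite !preimage_setU; apply: nullU => //; [apply: measurableU; exact: mpf|exact: mpf|apply: nullU => //; exact: mpf].
  + move=> t nN hm0 _.
    have n0 : ~ N0 t by move=> h; apply: nN; left; left.
    have n1 : ~ N1 t by move=> h; apply: nN; left; right.
    have nb : ~ Nb t by move=> h; apply: nN; right.
    have [A [C [eD eM s0 _ hhi]]] := key b b t n0 n1 hm0.
    have [h1 h2] := hhi (hNb t nb).
    rewrite eD eM; exact: alg_hi.
- move=> a b Hlo Hhi _.
  have [Na [mNa PNa hNa]] := @transfer_null _ _ _ _ _ P f KXU rcdXU _ (mlo a) (nlo a Hlo).
  have [Nb [mNb PNb hNb]] := @transfer_null _ _ _ _ _ P f KXU rcdXU _ (mhi b) (nhi b Hhi).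
  apply: (@ae_from _ _ _ _ _ P f _ ((N0 `|` N1) `|` (Na `|` Nb))).
  + by apply: measurableU; apply: measurableU.
  + rewrite !preimage_setU; apply: nullU.
    * by apply: measurableU; exact: mpf.
    * by apply: measurableU; exact: mpf.
    * by apply: nullU => //; exact: mpf.
    * by apply: nullU => //; exact: mpf.
  + move=> t nN hm0 _.
    have n0 : ~ N0 t by move=> h; apply: nN; left; left.
    have n1 : ~ N1 t by move=> h; apply: nN; left; right.
    have na : ~ Na t by move=> h; apply: nN; right; left.
    have nb : ~ Nb t by move=> h; apply: nN; right; right.
    have [A [C [eD eM s0 hlo hhi]]] := key a b t n0 n1 hm0.
    have [h1 h2] := hlo (hNa t na).
    have [h3 h4] := hhi (hNb t nb).
    have [l1 l2] := @alg_lo _ _ _ _ (m0Y t) _ _ s0 h1 h2.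
    have [u1 u2] := @alg_hi _ _ _ _ (m0Y t) _ _ s0 h3 h4.
    move: l1 l2 u1 u2; rewrite !lerD2r => l1 l2 u1 u2.
    rewrite eD eM; split; rewrite lerD2r.
      by rewrite ge_max; apply/andP; split; [exact: u1|exact: l1].
    by rewrite le_min; apply/andP; split; [exact: l2|exact: u2].
Qed.
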